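(* Suppose $-A_{22}$ is m-dissipative in $\mathcal H^-$ and $G(\mu)=A_{12}(A_{22}-\mu)^{-1}$ is compact for some (equivalently all) $\mu\in\mathbb C^-$. Then for every $\gamma\in[0,\pi/2)$, $\|G(\mu)\|\to0$ as $|\mu|\to\infty$, uniformly in the sector $\{\mu\ne0:\ |\arg\mu-\pi|\le\gamma\}$.
   Context: $\mathcal H=\mathcal H^+\oplus\mathcal H^-$ is an orthogonal decomposition of a separable Hilbert space. $A_{22}$ is a linear operator in $\mathcal H^-$ with domain $\mathcal D^-$, and $A_{12}:\mathcal D^-\to\mathcal H^+$ is linear; for $\mu\in\rho(A_{22})$, $G(\mu)=A_{12}(A_{22}-\mu)^{-1}$, defined on all of $\mathcal H^-$. An operator $T$ is dissipative if $\operatorname{Re}(Tx,x)\le0$ on $\mathcal D(T)$, and m-dissipative if it is dissipative with $T-\lambda$ boundedly invertible for all $\operatorname{Re}\lambda>0$. $\mathbb C^-=\{\operatorname{Re}\mu<0\}$. *)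

(* Defs.v *)
From HB Require Import structures.
From mathcomp Require Import all_boot all_order all_algebra.
From mathcomp Require Import complex.
From mathcomp Require Import all_classical all_reals all_analysis.
Set Implicit Arguments. Unset Strict Implicit. Unset Printing Implicit Defensive.
Import Order.TTheory GRing.Theory Num.Theory.
Import numFieldNormedType.Exports.
Local Open Scope classical_set_scope.
Local Open Scope ring_scope.

(* A complex Hilbert space: a complete normed space over C = R[i] whose norm
   comes from an inner product (linear in the first argument, conjugate
   symmetric, (x,x) = ||x||^2). *)
Record inner_product (R : realType) (V : completeNormedModType R[i]) := InnerProduct {
  ip : V -> V -> R[i];
  ipDl : forall (a : R[i]) (x y z : V), ip (a *: x + y) z = a * ip x z + ip y z;
  ip_conj : forall x y : V, ip x y = (ip y x)^*;
  ip_norm : forall x : V, ip x x = `|x| ^+ 2 }.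

Definition separable (T : topologicalType) :=
  exists S : set T, countable S /\ closure S = setT.

Definition lin_subspace (R : realType) (V : normedModType R[i]) (D : set V) :=
  D 0 /\ forall (a : R[i]) (x y : V), D x -> D y -> D (a *: x + y).

Definition linear_on (R : realType) (V W : normedModType R[i]) (D : set V)
  (f : V -> W) :=
  forall (a : R[i]) (x y : V), D x -> D y -> f (a *: x + y) = a *: f x + f y.

Definition bounded_linear (R : realType) (V W : normedModType R[i]) (f : V -> W) :=
  linear_on setT f /\ exists M : R[i], forall x, `|f x| <= M * `|x|.

(* RR is the bounded inverse (T - lam)^{-1} of T - lam, T with domain D;
   i.e. lam lies in the resolvent set and RR is the resolvent. *)
Definition bounded_inverse_of (R : realType) (V : normedModType R[i]) (D : set V)
  (T : V -> V) (lam : R[i]) (RR : V -> V) :=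
  bounded_linear RR /\
  (forall y, D (RR y) /\ T (RR y) - lam *: RR y = y) /\
  (forall x, D x -> RR (T x - lam *: x) = x).

Definition in_resolvent_set (R : realType) (V : normedModType R[i]) (D : set V)
  (T : V -> V) (lam : R[i]) := exists RR, bounded_inverse_of D T lam RR.

Definition dissipative (R : realType) (V : completeNormedModType R[i])
  (I : inner_product V) (D : set V) (T : V -> V) :=
  forall x, D x -> 'Re (ip I (T x) x) <= 0.

Definition m_dissipative (R : realType) (V : completeNormedModType R[i])
  (I : inner_product V) (D : set V) (T : V -> V) :=
  dissipative I D T /\
  forall lam : R[i], 0 < 'Re lam -> in_resolvent_set D T lam.

Definition compact_operator (R : realType) (V W : normedModType R[i]) (f : V -> W) :=
  bounded_linear f /\ compact (closure [set f x | x in [set x : V | `|x| <= 1]]).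

(* the closed sector { mu <> 0 : |arg mu - pi| <= gamma } *)
Definition sector (R : realType) (gamma : R) : set R[i] :=
  [set mu | mu != 0 /\ exists theta : R, `|theta - pi| <= gamma /\
      mu = `|mu| * (cos theta +i* sin theta)%C].

(* Main.v *)
Require Import Defs.
From HB Require Import structures.
From mathcomp Require Import all_boot all_order all_algebra.
From mathcomp Require Import complex.
From mathcomp Require Import all_classical all_reals all_analysis.
From mathcomp Require Import ring lra.
Import Order.TTheory GRing.Theory Num.Theory.
Import numFieldNormedType.Exports.
Local Open Scope classical_set_scope.
Local Open Scope ring_scope.
Set Implicit Arguments. Unset Strict Implicit. Unset Printing Implicit Defensive.
Section Tool.
Context (R : realType).
Lemma ge0_C (z : R[i]) : 0 <= z -> z = ((complex.Re z)%:C)%C.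
Proof. by case: z => a b; rewrite lecE /= => /andP[/eqP -> _]. Qed.
Lemma ge0_Re (z : R[i]) : 0 <= z -> 0 <= complex.Re z.
Proof. by case: z => a b; rewrite lecE /= => /andP[_ ->]. Qed.
Definition nr (V : normedModType R[i]) (x : V) : R := complex.Re `|x|.
Definition nc (c : R[i]) : R := complex.Re `|c|.
Lemma nrE (V : normedModType R[i]) (x : V) : `|x| = ((nr x)%:C)%C.
Proof. exact/ge0_C/normr_ge0. Qed.
Lemma ncE (c : R[i]) : `|c| = ((nc c)%:C)%C.
Proof. exact/ge0_C/normr_ge0. Qed.
Lemma nr_ge0 (V : normedModType R[i]) (x : V) : 0 <= nr x.
Proof. exact/ge0_Re/normr_ge0. Qed.
Lemma nc_ge0 (c : R[i]) : 0 <= nc c.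
Proof. exact/ge0_Re/normr_ge0. Qed.
Lemma rC_add (a b : R) : ((a + b)%:C = a%:C + b%:C)%C. Proof. exact: rmorphD. Qed.
Lemma rC_mul (a b : R) : ((a * b)%:C = a%:C * b%:C)%C. Proof. exact: rmorphM. Qed.
Lemma rC_opp (a : R) : ((- a)%:C = - a%:C)%C. Proof. exact: rmorphN. Qed.
Lemma rC_sub (a b : R) : ((a - b)%:C = a%:C - b%:C)%C. Proof. exact: rmorphB. Qed.
Lemma rC_exp (a : R) n : ((a ^+ n)%:C = a%:C ^+ n)%C. Proof. exact: rmorphXn. Qed.
Lemma rC_inv (a : R) : ((a^-1)%:C = (a%:C)^-1)%C. Proof. exact: fmorphV. Qed.
Lemma rC_nat n : ((n%:R : R)%:C = n%:R)%C. Proof. exact: rmorph_nat. Qed.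
Lemma rC0 : ((0 : R)%:C = 0)%C. Proof. by []. Qed.
Lemma rC1 : ((1 : R)%:C = 1)%C. Proof. by []. Qed.
Lemma rC_le (a b : R) : ((a%:C <= b%:C) = (a <= b))%C. Proof. exact: lecR. Qed.
Lemma rC_lt (a b : R) : ((a%:C < b%:C) = (a < b))%C. Proof. exact: ltcR. Qed.
Lemma rC_inj (a b : R) : (a%:C = b%:C)%C -> a = b. Proof. by case. Qed.
Lemma nrD (V : normedModType R[i]) (x y : V) : nr (x + y) <= nr x + nr y.
Proof. by rewrite -rC_le rC_add -!nrE ler_normD. Qed.
Lemma nrN (V : normedModType R[i]) (x : V) : nr (- x) = nr x.
Proof. by apply: rC_inj; rewrite -!nrE normrN. Qed.
Lemma nrB (V : normedModType R[i]) (x y : V) : nr (x - y) = nr (y - x).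
Proof. by rewrite -nrN opprB. Qed.
Lemma nrZ (V : normedModType R[i]) (a : R[i]) (x : V) : nr (a *: x) = nc a * nr x.
Proof. by apply: rC_inj; rewrite rC_mul -!nrE -ncE normrZ. Qed.
Lemma nr0 (V : normedModType R[i]) : nr (0 : V) = 0.
Proof. by apply: rC_inj; rewrite -nrE normr0. Qed.
Lemma nr_eq0 (V : normedModType R[i]) (x : V) : (nr x == 0) = (x == 0).
Proof.
apply/eqP/eqP => [h|->]; last exact: nr0.
by apply/eqP; rewrite -normr_eq0 nrE h. Qed.
Lemma ncC (a : R) : nc (a%:C)%C = `|a|.
Proof. by apply: rC_inj; rewrite -ncE normc_def /= expr0n /= addr0 sqrtr_sqr. Qed.
Lemma nc_real (c : R[i]) : 0 <= c -> nc c = complex.Re c.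
Proof. by move=> h; rewrite (ge0_C h) ncC ger0_norm //; apply: ge0_Re. Qed.
End Tool.
Section Conj.
Context (R : realType).
Implicit Types a b : R[i].
Lemma cjM a b : (a * b)^* = a^* * b^*. Proof. exact: rmorphM. Qed.
Lemma cjD a b : (a + b)^* = a^* + b^*. Proof. exact: rmorphD. Qed.
Lemma cjN a : (- a)^* = - a^*. Proof. exact: rmorphN. Qed.
Lemma cjB a b : (a - b)^* = a^* - b^*. Proof. exact: rmorphB. Qed.
Lemma cjV a : (a^-1)^* = (a^*)^-1. Proof. exact: fmorphV. Qed.
Lemma cjX a n : (a ^+ n)^* = (a^*) ^+ n. Proof. exact: rmorphXn. Qed.
Lemma cjK a : a^*^* = a. Proof. exact: conjCK. Qed.
Lemma cj_nneg a : 0 <= a -> a^* = a. Proof. by move=> h; apply/CrealP; apply: ger0_real. Qed.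
End Conj.

Section IP.
Context (R : realType) (V : completeNormedModType R[i]) (I : inner_product V).
Local Notation "<< x , y >>" := (ip I x y).

Lemma ip0l y : << 0, y >> = 0.
Proof. have := ipDl I 1 0 0 y; rewrite scale1r addr0 mul1r.
by move/(congr1 (fun z => z - << 0, y >>)); rewrite subrr addrK => <-. Qed.
Lemma ipDl' x y z : << x + y, z >> = << x, z >> + << y, z >>.
Proof. by rewrite -{1}(scale1r x) ipDl mul1r. Qed.
Lemma ipZl a x z : << a *: x, z >> = a * << x, z >>.
Proof. by rewrite -{1}(addr0 (a *: x)) ipDl ip0l addr0. Qed.
Lemma ipNl x z : << - x, z >> = - << x, z >>.
Proof. by rewrite -scaleN1r ipZl mulN1r. Qed.
Lemma ipBl x y z : << x - y, z >> = << x, z >> - << y, z >>.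
Proof. by rewrite ipDl' ipNl. Qed.
Lemma ip0r y : << y, 0 >> = 0.
Proof. by rewrite ip_conj ip0l conjC0. Qed.
Lemma ipDr x y z : << z, x + y >> = << z, x >> + << z, y >>.
Proof. by rewrite ip_conj ipDl' cjD [<< z, x >>]ip_conj [<< z, y >>]ip_conj. Qed.
Lemma ipZr a x z : << z, a *: x >> = a^* * << z, x >>.
Proof. by rewrite ip_conj ipZl cjM [<< z, x >>]ip_conj. Qed.
Lemma ipNr x z : << z, - x >> = - << z, x >>.
Proof. by rewrite ip_conj ipNl cjN [<< z, x >>]ip_conj. Qed.
Lemma ipBr x y z : << z, x - y >> = << z, x >> - << z, y >>.
Proof. by rewrite ipDr ipNr. Qed.

Lemma normr_conj (x : V) : (`|x|)^* = `|x|.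
Proof. by apply/CrealP; apply: ger0_real. Qed.

Lemma CS x y : `|<< x, y >>| <= `|x| * `|y|.
Proof.
have [->|y0] := eqVneq y 0.
  by rewrite ip0r normr0 normr0 mulr0.
set a := << x, y >>.
set n := `|y| ^+ 2.
have n0 : n != 0 by rewrite /n expf_neq0 // normr_eq0.
set t := a / n.
have H0 : 0 <= << x - t *: y, x - t *: y >> by rewrite ip_norm exprn_ge0.
have E : << x - t *: y, x - t *: y >> = `|x| ^+ 2 - `|a| ^+ 2 / n.
  rewrite !ipBl !ipBr !ipZl !ipZr !ip_norm -/n.
  have -> : << y, x >> = a^* by rewrite ip_conj.
  rewrite /t cjM cjV /n cjX normr_conj -/n normCK.
  rewrite -/a; field; exact: n0.
rewrite E subr_ge0 in H0.
have H1 : `|a| ^+ 2 <= (`|x| * `|y|) ^+ 2.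
  rewrite exprMn -/n.
  have n0' : 0 < n by rewrite lt0r n0 exprn_ge0.
  by rewrite -(ler_pdivrMr _ _ n0').
by rewrite -(ler_pXn2r (n:=2)) // ?nnegrE ?mulr_ge0.
Qed.
End IP.

Section IPR.
Context (R : realType) (V : completeNormedModType R[i]) (I : inner_product V).
Local Notation "<< x , y >>" := (ip I x y).
Lemma ipnn x : << x, x >> = ((nr x ^+ 2)%:C)%C.
Proof. by rewrite ip_norm nrE rC_exp. Qed.
Lemma CSr x y : nc << x, y >> <= nr x * nr y.
Proof. by rewrite -rC_le rC_mul -ncE -!nrE CS. Qed.
Lemma parallel (a b : V) : nr (a - b) ^+ 2 + nr (a + b) ^+ 2 = 2 * nr a ^+ 2 + 2 * nr b ^+ 2.
Proof.
apply: rC_inj; rewrite !rC_add !(@rC_mul R 2) !rC_exp -!nrE -!(ip_norm I) (@rC_nat R 2).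
rewrite !ipBl !ipDl' !ipBr !ipDr; ring.
Qed.
Lemma expand (e m : V) s : << e - s *: m, e - s *: m >> =
  << e, e >> - s^* * << e, m >> - s * << e, m >>^* + s * s^* * << m, m >>.
Proof.
rewrite !ipBl !ipBr !ipZl !ipZr [<< m, e >>]ip_conj; ring.
Qed.
End IPR.

Lemma small_inv (R : realType) (e : R) : 0 < e -> exists K : nat, K.+1%:R^-1 < e.
Proof.
move=> e0; exists (Num.Def.trunc e^-1).
have h := truncnS_gt e^-1.
rewrite -[X in _ < X](invrK e) ltf_pV2 ?posrE ?invr_gt0 // ltr0n.
Qed.
Lemma inv_mono (R : realType) (K k : nat) : (K <= k)%N -> (k.+1%:R^-1 : R) <= K.+1%:R^-1.
Proof. by move=> h; rewrite lef_pV2 ?posrE ?ltr0n // ler_nat ltnS. Qed.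
Lemma inv_pos (R : realType) (k : nat) : (0 : R) < k.+1%:R^-1.
Proof. by rewrite invr_gt0 ltr0n. Qed.

Lemma helper1 (R : realType) (a b c e d f g : R) : a + 2 ^+ 2 * b = 2 * c + 2 * e ->
  c < d + f -> e < d + g -> d <= b -> a <= 2 * f + 2 * g.
Proof. rewrite (_ : (2:R) ^+ 2 = 4); last by rewrite expr2; lra. lra. Qed.

Lemma helper2 (R : realType) (x a b r : R) : 0 <= x -> 0 < r -> b^-1 <= a^-1 ->
  x ^+ 2 <= 2 / a + 2 / b -> a^-1 < r * r / 4 -> x < r.
Proof. move=> x0 r0 ba hx ha. rewrite ltNge; apply/negP => hr. nra. Qed.

Lemma helper3 (R : realType) (y A t d g e : R) : 0 <= y -> 0 <= A -> 0 <= t -> 0 <= d -> 0 < e ->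
  y <= A + t -> t < e / (2 * (2 * d + 5) + e) -> A ^+ 2 < d + g -> g < e / 2 -> g < 1 ->
  y ^+ 2 <= d + e.
Proof.
move=> y0 A0 t0 d0 e0 hy ht hA hg1 hg2.
set X := 2 * d + 5.
have X0 : 0 < X by rewrite /X; lra.
have hd : t * (2 * X + e) < e by rewrite -ltr_pdivlMr //; lra.
have hA2 : A <= d + 2 by nra.
have t1 : t < 1 by nra.
have : y ^+ 2 <= (A + t) ^+ 2 by rewrite ler_pXn2r // ?nnegrE; lra.
have h1 : t * (2 * A + t) <= t * X by apply: ler_wpM2l => //; rewrite /X; lra.
have h2 : 2 * (t * X) < e by nra.
have h3 : (A + t) ^+ 2 = A ^+ 2 + t * (2 * A + t) by rewrite !expr2; ring.
rewrite h3; lra.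
Qed.
Lemma helper4 (R : realType) (M c2 d E t : R) : 0 <= M -> 0 <= c2 -> 0 < t -> t * (M + 1) = 1 ->
  d <= E - 2 * t * c2 + t ^+ 2 * c2 * M -> E <= d -> c2 <= 0.
Proof.
move=> M0 c0 t0 tM h1 h2.
have h3 : 2 * t * c2 <= t ^+ 2 * c2 * M by lra.
have h4 : t * M < 1 by nra.
have h5 : t * (c2 * (2 - t * M)) <= 0 by rewrite expr2 in h3; nra.
have h6 : c2 * (2 - t * M) <= 0 by rewrite pmulr_rle0 in h5.
nra.
Qed.

Lemma rC_poly (R : realType) (a b t M : R) :
  ((a - 2 * t * b + t ^+ 2 * b * M)%:C = a%:C - 2 * t%:C * b%:C + t%:C ^+ 2 * b%:C * M%:C)%C.
Proof. by rewrite rC_add rC_sub !rC_mul (@rC_nat R 2) expr2. Qed.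

Section Proj.
Context (R : realType) (V : completeNormedModType R[i]) (I : inner_product V).
Local Notation "<< x , y >>" := (ip I x y).

Lemma ls_Z (N : set V) : lin_subspace N -> forall a (x : V), N x -> N (a *: x).
Proof. by move=> [N0 NZ] a x Nx; rewrite -[_ *: _]addr0; apply: NZ. Qed.
Lemma ls_D (N : set V) : lin_subspace N -> forall (x y : V), N x -> N y -> N (x + y).
Proof. by move=> [N0 NZ] x y Nx Ny; rewrite -[x]scale1r; apply: NZ. Qed.

Lemma nc2 : nc (2 : R[i]) = 2.
Proof. by rewrite -(@rC_nat R 2) ncC ger0_norm. Qed.

Lemma proj (N : set V) (hN : lin_subspace N) (hc : closed N) (x0 : V) :
  exists2 p, N p & forall m, N m -> << x0 - p, m >> = 0.
Proof.
have N0 : N 0 := hN.1.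
set D := [set r : R | exists2 n, N n & r = nr (x0 - n) ^+ 2].
have Dlb : lbound D 0 by move=> r [n _ ->]; exact: sqr_ge0.
have Dne : D (nr (x0 - 0) ^+ 2) by exists 0.
have hinf : has_inf D by split; [exists (nr (x0 - 0) ^+ 2)|exists 0].
set d := inf D.
have dle n : N n -> d <= nr (x0 - n) ^+ 2.
  by move=> Nn; apply: (ge_inf hinf.2); exists n.
have d0 : 0 <= d by apply: lb_le_inf => //; exists (nr (x0 - 0) ^+ 2).
have : forall k : nat, exists n, N n /\ nr (x0 - n) ^+ 2 < d + k.+1%:R^-1.
  move=> k; have [e [n Nn ->] He] := inf_adherent (inv_pos R k) hinf.
  by exists n.
move=> /choice [u hu].
have cb i j : nr (u i - u j) ^+ 2 <= 2 * i.+1%:R^-1 + 2 * j.+1%:R^-1.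
  have [Ni Hi] := hu i; have [Nj Hj] := hu j.
  have := parallel I (x0 - u i) (x0 - u j).
  have -> : x0 - u i - (x0 - u j) = u j - u i.
    by rewrite opprB addrC addrA subrK.
  set m := (2 : R[i])^-1 *: (u i + u j).
  have Nm : N m by apply: ls_Z => //; apply: ls_D.
  have -> : x0 - u i + (x0 - u j) = 2 *: (x0 - m).
    rewrite scalerBr /m scalerA divff ?scale1r; last by rewrite pnatr_eq0.
    by rewrite scaler_nat mulr2n opprD addrACA.
  rewrite nrZ nc2 nrB => E.
  have := dle m Nm.
  move=> hd; rewrite exprMn in E.
  exact: (helper1 E Hi Hj hd).
have cu : cauchy (u @ \oo).
  apply: cauchy_exP => e e0.
  have er : e = ((complex.Re e)%:C)%C by apply: ge0_C; exact: ltW.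
  have r0 : 0 < complex.Re e by rewrite -(@rC_lt R) -er.
  have r2 : 0 < complex.Re e * complex.Re e / 4 by apply: divr_gt0 => //; apply: mulr_gt0.
  have [K HK] := small_inv r2.
  exists (u K); apply: filterS (nbhs_infty_ge K) => k kK /=.
  rewrite -ball_normE /ball_ /= er nrE rC_lt.
  exact: (helper2 (nr_ge0 _) r0 (inv_mono R kK) (cb K k) HK).
have cv : cvg (u @ \oo) := @cauchy_cvg _ _ (fmap_proper_filter u eventually_filter) cu.
set p := lim (u @ \oo).
have Np : N p.
  have hh : \forall k \near \oo, N (u k) by near=> k; exact: (hu k).1.
  exact: (closed_cvg N hc hh p cv).
have dp : nr (x0 - p) ^+ 2 <= d.
  apply/ler_addgt0Pr => e e0.
  set X := 2 * d + 5.
  have X0 : 0 < 2 * X + e by rewrite /X; lra.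
  set del := e / (2 * X + e).
  have del0 : 0 < del by apply: divr_gt0.
  have e2 : 0 < Num.min (e / 2) 1 by rewrite lt_min; apply/andP; split; lra.
  have [K HK] := small_inv e2.
  have : \forall k \near \oo, (K <= k)%N /\ `|p - u k| < ((del)%:C)%C.
    near=> k; split; first by near: k; exact: nbhs_infty_ge.
    near: k; move/cvgrPdist_lt: cv; apply; by rewrite rC_lt.
  move=> /filter_ex [k [kK hk]].
  rewrite nrE rC_lt in hk.
  have hA := (hu k).2.
  have hg := le_lt_trans (inv_mono R kK) HK.
  rewrite lt_min in hg; case/andP: hg => hg1 hg2.
  have tri : nr (x0 - p) <= nr (x0 - u k) + nr (p - u k).
    have -> : x0 - p = (x0 - u k) + (u k - p) by rewrite addrA subrK.
    by rewrite [nr (p - u k)]nrB; apply: nrD.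
  exact: (helper3 (nr_ge0 _) (nr_ge0 _) (nr_ge0 _) d0 e0 tri hk hA hg1 hg2).
exists p => // m Nm.
set c := << x0 - p, m >>.
set M := nr m ^+ 2.
have M0 : 0 <= M by apply: sqr_ge0.
set t := (M + 1)^-1.
have t0 : 0 < t by rewrite invr_gt0; lra.
have tM : t * (M + 1) = 1 by rewrite mulVf //; apply: lt0r_neq0; lra.
set s := ((t%:C)%C * c).
have Ns : N (p + s *: m) by apply: ls_D => //; apply: ls_Z.
have := dle _ Ns.
have -> : x0 - (p + s *: m) = (x0 - p) - s *: m by rewrite opprD addrA.
have E : nr (x0 - p - s *: m) ^+ 2 = nr (x0 - p) ^+ 2 - 2 * t * nc c ^+ 2 + t ^+ 2 * nc c ^+ 2 * M.
  apply: rC_inj; rewrite -(ipnn I) (expand I) rC_poly -/c !(ipnn I).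
  have hcc : ((nc c ^+ 2)%:C)%C = c * c^* by rewrite rC_exp -ncE normCK.
  rewrite hcc /s cjM (cj_nneg (ltW _)) ?rC_lt //; rewrite -/M; ring.
rewrite E => h.
have c2 := helper4 M0 (sqr_ge0 (nc c)) t0 tM h dp.
have : nc c ^+ 2 = 0 by apply/eqP; rewrite eq_le c2 sqr_ge0.
move/eqP; rewrite sqrf_eq0 => /eqP h0.
by apply/eqP; rewrite -normr_eq0 ncE h0.
Unshelve. all: by end_near.
Qed.

End Proj.
Lemma closure_near (R : realType) (V : normedModType R[i]) (A : set V) (x : V) :
  closure A x -> forall e : R, 0 < e -> exists a, A a /\ nr (x - a) < e.
Proof.
move=> hx e e0.
have e0' : (0 : R[i]) < (e%:C)%C by rewrite -rC0 rC_lt.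
have [a [Aa ba]] := hx _ (nbhsx_ballx x (e%:C)%C e0').
exists a; split => //.
by move: ba; rewrite -ball_normE /ball_ /= nrE rC_lt.
Qed.

Section Riesz.
Context (R : realType) (V : completeNormedModType R[i]) (I : inner_product V).
Local Notation "<< x , y >>" := (ip I x y).

Lemma riesz (phi : V -> R[i])
  (hlin : forall a x y, phi (a *: x + y) = a * phi x + phi y)
  (hb : exists M : R, forall x, nc (phi x) <= M * nr x) :
  exists u, forall x, phi x = << x, u >>.
Proof.
have phi0 : phi 0 = 0.
  have := hlin 1 0 0; rewrite scale1r addr0 mul1r.
  by move/(congr1 (fun z => z - phi 0)); rewrite subrr addrK => <-.
have phiZ a x : phi (a *: x) = a * phi x by rewrite -[a *: x]addr0 hlin phi0 addr0.
have phiD x y : phi (x + y) = phi x + phi y by have := hlin 1 x y; rewrite scale1r mul1r.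
have phiB x y : phi (x - y) = phi x - phi y.
  by rewrite phiD -scaleN1r phiZ mulN1r.
have [M hM] := hb.
set N := [set x | phi x = 0].
have hN : lin_subspace N.
  split; first by rewrite /N /= phi0.
  by move=> a x y; rewrite /N /= hlin => -> ->; rewrite mulr0 addr0.
have hc : closed N.
  move=> x /closure_near hx; rewrite /N /=.
  apply/eqP; rewrite -normr_eq0 ncE; apply/eqP; congr (_%:C)%C.
  apply/eqP; rewrite eq_le nc_ge0 andbT.
  apply/ler_addgt0Pr => e e0; rewrite add0r.
  set M' := `|M| + 1.
  have M'0 : 0 < M' by rewrite /M'; have := normr_ge0 M; lra.
  have [a [Na ha]] := hx (e / M') (divr_gt0 e0 M'0).
  have : phi x = phi (x - a) by rewrite phiB Na subr0.
  move=> ->.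
  apply: (le_trans (hM _)).
  have hMM : M <= M' by rewrite /M'; have := ler_norm M; lra.
  have := nr_ge0 (x - a).
  rewrite ltr_pdivlMr // in ha.
  move=> h0; apply: (le_trans (y := M' * nr (x - a))); first exact: ler_wpM2r.
  by rewrite mulrC ltW.
case: (pselect (forall x, phi x = 0)) => [h0|].
  by exists 0 => x; rewrite h0 ip0r.
move=> /existsNP [x1 hx1].
have [p Np orth] := proj I hN hc x1.
set e := x1 - p.
have phie : phi e = phi x1 by rewrite /e phiB Np subr0.
have e0 : e != 0.
  by apply/eqP => h; apply: hx1; rewrite -phie h phi0.
set n := << e, e >>.
have n0 : n != 0 by rewrite /n ip_norm expf_neq0 // normr_eq0.
exists (((phi e)^* / n) *: e) => x.
set z := x - (phi x / phi e) *: e.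
have Nz : N z.
  rewrite /N /= /z phiB phiZ -mulrA mulVf ?mulr1 ?subrr //.
  by rewrite phie; apply/eqP.
have := orth _ Nz; rewrite -/e /z ipBr ipZr -/n => /eqP; rewrite subr_eq0 => /eqP h.
rewrite ipZr cjM cjV cjK.
have nr : n^* = n by rewrite /n ip_norm; apply: cj_nneg; apply: exprn_ge0.
rewrite nr.
have -> : << x, e >> = << e, x >>^* by rewrite ip_conj.
rewrite h [(_ * n)^*]cjM cjK nr.
have pe0 : phi e != 0 by rewrite phie; apply/eqP.
field.
by apply/andP; split.
Qed.
End Riesz.


Lemma closure_near_rev (R : realType) (V : normedModType R[i]) (A : set V) (x : V) :
  (forall e : R, 0 < e -> exists a, A a /\ nr (x - a) < e) -> closure A x.
Proof.
move=> h B /nbhs_ballP [eps eps0 hB].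
have er : eps = ((complex.Re eps)%:C)%C by apply: ge0_C; exact: ltW.
have r0 : 0 < complex.Re eps by rewrite -(@rC_lt R) -er.
have [a [Aa ha]] := h _ r0.
exists a; split => //; apply: hB.
by rewrite -ball_normE /ball_ /= er nrE rC_lt.
Qed.

Lemma ncD (R : realType) (a b : R[i]) : nc (a + b) <= nc a + nc b.
Proof. by rewrite -rC_le rC_add -!ncE ler_normD. Qed.
Lemma ncM (R : realType) (a b : R[i]) : nc (a * b) = nc a * nc b.
Proof. by apply: rC_inj; rewrite rC_mul -!ncE normrM. Qed.

Lemma closure_ls (R : realType) (V : normedModType R[i]) (S : set V) :
  lin_subspace S -> lin_subspace (closure S).
Proof.
move=> [S0 SZ]; split; first by apply: subset_closure.
move=> a x y /closure_near hx /closure_near hy; apply: closure_near_rev => e e0.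
have a1 : 0 < nc a + 1 by have := nc_ge0 a; lra.
have [s1 [Ss1 h1]] := hx (e / 2 / (nc a + 1)) (divr_gt0 (divr_gt0 e0 (ltr0Sn R 1)) a1).
have [s2 [Ss2 h2]] := hy (e / 2) (divr_gt0 e0 (ltr0Sn R 1)).
exists (a *: s1 + s2); split; first exact: SZ.
have -> : a *: x + y - (a *: s1 + s2) = a *: (x - s1) + (y - s2).
  by rewrite scalerBr opprD addrACA.
apply: (le_lt_trans (nrD _ _)); rewrite nrZ.
rewrite ltr_pdivlMr // in h1.
have := nc_ge0 a; have := nr_ge0 (x - s1).
nra.
Qed.

Lemma bl_bound (R : realType) (V W : normedModType R[i]) (f : V -> W) :
  bounded_linear f -> exists M : R, 0 <= M /\ forall x, nr (f x) <= M * nr x.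
Proof.
move=> [_ [M hM]].
exists (Num.max (complex.Re M) 0); split; first by rewrite le_max lexx orbT.
move=> x; have := hM x; rewrite !nrE.
case: M {hM} => a b; rewrite lecE /= => /andP[_].
rewrite mulr0 subr0 => h; apply: (le_trans h); apply: ler_wpM2r; first exact: nr_ge0.
by rewrite le_max lexx.
Qed.

Lemma lin_Z (R : realType) (V W : normedModType R[i]) (f : V -> W) :
  linear_on setT f -> forall a x, f (a *: x) = a *: f x.
Proof.
move=> hf a x.
have f0 : f 0 = 0.
  have := hf 1 0 0 I I; rewrite scale1r addr0 scale1r.
  by move/(congr1 (fun z => z - f 0)); rewrite subrr addrK => <-.
by rewrite -[a *: x]addr0 hf // f0 addr0.
Qed.
Lemma lin_D (R : realType) (V W : normedModType R[i]) (f : V -> W) :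
  linear_on setT f -> forall x y, f (x + y) = f x + f y.
Proof. by move=> hf x y; have := hf 1 x y I I; rewrite !scale1r. Qed.
Lemma lin_0 (R : realType) (V W : normedModType R[i]) (f : V -> W) :
  linear_on setT f -> f 0 = 0.
Proof. by move=> hf; rewrite -(scale0r (0 : V)) (lin_Z hf) scale0r. Qed.
Lemma lin_B (R : realType) (V W : normedModType R[i]) (f : V -> W) :
  linear_on setT f -> forall x y, f (x - y) = f x - f y.
Proof. by move=> hf x y; rewrite lin_D // -scaleN1r (lin_Z hf) scaleN1r. Qed.

Lemma lemL (R : realType) (V W : completeNormedModType R[i])
  (IV : inner_product V) (IW : inner_product W) (R0 : V -> V) (K : V -> W)
  (hR0 : bounded_linear R0) (hK : bounded_linear K)
  (inj : forall y, R0 y = 0 -> y = 0) (z : W) (eta : R) : 0 < eta ->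
  exists delta : R, 0 < delta /\ forall y, nr y <= 1 -> nr (R0 y) <= delta ->
    nc (ip IW (K y) z) <= eta.
Proof.
move=> eta0.
have [M0 [M00 hM0]] := bl_bound hR0.
have [MK [MK0 hMK]] := bl_bound hK.
have lR0 := hR0.1; have lK := hK.1.
have [u hu] : exists u, forall y, ip IW (K y) z = ip IV y u.
  apply: (@riesz _ _ IV (fun y => ip IW (K y) z)).
    by move=> a x y; rewrite (lK a x y I I) ipDl.
  exists (MK * nr z) => x; apply: (le_trans (CSr _ _ _)).
  rewrite mulrAC; apply: ler_wpM2r; first exact: nr_ge0.
  exact: hMK.
set S := [set w | exists v, forall x, ip IV (R0 x) v = ip IV x w].
have lsS : lin_subspace S.
  split; first by exists 0 => x; rewrite !ip0r.
  move=> a w1 w2 [v1 h1] [v2 h2]; exists (a *: v1 + v2) => x.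
  by rewrite !ipDr !ipZr h1 h2.
have [p Np orth] := proj IV (closure_ls lsS) (@closed_closure _ S) u.
have up : u = p.
  apply/eqP; rewrite -subr_eq0; apply/eqP.
  set e := u - p.
  have [w hw] : exists w, forall x, ip IV (R0 x) (R0 e) = ip IV x w.
    apply: (@riesz _ _ IV (fun x => ip IV (R0 x) (R0 e))).
      by move=> a x y; rewrite (lR0 a x y I I) ipDl.
    exists (M0 * nr (R0 e)) => x; apply: (le_trans (CSr _ _ _)).
    rewrite mulrAC; apply: ler_wpM2r; first exact: nr_ge0.
    exact: hM0.
  have Sw : S w by exists (R0 e).
  have := orth w (subset_closure Sw); rewrite -/e -hw ip_norm => /eqP.
  rewrite expf_eq0 /= normr_eq0 => /eqP /inj.
  done.
have [s [Ss hs]] := closure_near Np (divr_gt0 eta0 (ltr0Sn R 1)).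
rewrite -up in hs.
case: Ss => v hv.
have v1 : 0 < nr v + 1 by have := nr_ge0 v; lra.
exists (eta / 2 / (nr v + 1)); split; first by apply: divr_gt0 => //; apply: divr_gt0.
move=> y y1 hy.
rewrite hu.
have -> : u = (u - s) + s by rewrite subrK.
rewrite ipDr -hv.
apply: (le_trans (ncD _ _)).
have c1 := CSr IV y (u - s).
have c2 := CSr IV (R0 y) v.
rewrite ler_pdivlMr // in hy.
have := nr_ge0 y; have := nr_ge0 (u - s); have := nr_ge0 (R0 y); have := nr_ge0 v.
nra.
Qed.

From mathcomp Require Import finmap.

Lemma fin_delta (R : realType) (T : eqType) (Q : T -> R -> Prop)
  (hQ : forall z d d', 0 < d' -> d' <= d -> Q z d -> Q z d') (s : seq T) :
  (forall z, z \in s -> exists d, 0 < d /\ Q z d) ->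
  exists d, 0 < d /\ forall z, z \in s -> Q z d.
Proof.
elim: s => [|a s IH] h; first by exists 1; split => // z; rewrite in_nil.
have [d1 [d10 Q1]] := h a (mem_head a s).
have [d2 [d20 Q2]] : exists d, 0 < d /\ forall z, z \in s -> Q z d.
  by apply: IH => z zs; apply: h; rewrite in_cons zs orbT.
exists (Num.min d1 d2); split; first by rewrite lt_min d10 d20.
move=> z; rewrite in_cons => /orP [/eqP ->|zs].
  by apply: hQ Q1; rewrite ?lt_min ?d10 ?d20 // ge_min lexx.
by apply: (hQ _ d2); rewrite ?lt_min ?d10 ?d20 ?ge_min ?lexx ?orbT //; apply: Q2.
Qed.

Lemma helper5 (R : realType) (x t eps : R) : 0 <= x -> 0 <= t -> 0 < eps ->
  x ^+ 2 <= eps ^+ 2 / 2 + x * t -> t < eps / 3 -> x <= eps.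
Proof. move=> x0 t0 e0 h ht. rewrite leNgt; apply/negP => hx. nra. Qed.

Lemma lemK (R : realType) (V W : completeNormedModType R[i])
  (IV : inner_product V) (IW : inner_product W) (R0 : V -> V) (K : V -> W)
  (hR0 : bounded_linear R0) (hK : bounded_linear K)
  (inj : forall y, R0 y = 0 -> y = 0)
  (hC : compact (closure [set K x | x in [set x : V | `|x| <= 1]]))
  (eps : R) : 0 < eps ->
  exists delta : R, 0 < delta /\ forall y, nr y <= 1 -> nr (R0 y) <= delta ->
    nr (K y) <= eps.
Proof.
move=> eps0.
set C := closure _ in hC.
rewrite compact_cover in hC.
have r0 : (0 : R[i]) < ((eps / 3)%:C)%C by rewrite -rC0 rC_lt divr_gt0.
have [|D' sub hcov] := hC W C (fun z => ball z ((eps / 3)%:C)%C) (fun _ _ => ball_open _ _).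
  by move=> x Cx; exists x => //; apply: ballxx.
set eta := eps ^+ 2 / 2.
have eta0 : 0 < eta by rewrite /eta divr_gt0 // exprn_gt0.
have [d [d0 hd]] := @fin_delta R W
  (fun z d => forall y, nr y <= 1 -> nr (R0 y) <= d -> nc (ip IW (K y) z) <= eta)
  (fun z d d' _ h hQ y y1 hy => hQ y y1 (le_trans hy h)) (enum_fset D')
  (fun z _ => lemL IV IW hR0 hK inj z eta0).
exists d; split => // y y1 hy.
have CKy : C (K y).
  apply: subset_closure; exists y => //=.
  by rewrite nrE -rC1 rC_le.
have [z zD bz] := hcov _ CKy.
have hz := hd z zD y y1 hy.
move: bz; rewrite -ball_normE /ball_ /= nrE rC_lt => bz.
have E : ip IW (K y) (K y) = ip IW (K y) z + ip IW (K y) (K y - z).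
  by rewrite ipBr addrC subrK.
have E2 : nr (K y) ^+ 2 <= eta + nr (K y) * nr (z - K y).
  have -> : nr (K y) ^+ 2 = nc (ip IW (K y) (K y)) by rewrite ipnn ncC ger0_norm // sqr_ge0.
  rewrite E; apply: (le_trans (ncD _ _)); apply: lerD => //.
  by rewrite [nr (z - _)]nrB; apply: CSr.
exact: (helper5 (nr_ge0 _) (nr_ge0 _) eps0 E2 bz).
Qed.


Lemma cos_sector (R : realType) (gamma theta : R) : 0 <= gamma < pi / 2 ->
  `|theta - pi| <= gamma -> cos theta <= - cos gamma.
Proof.
move=> /andP[g0 gpi] ht.
have pi0 : 0 < pi :> R := pi_gt0 R.
have -> : theta = (theta - pi) + pi by rewrite subrK.
rewrite cosDpi -cos_norm lerN2.
rewrite leNgt; apply/negP; rewrite ltr_cos ?in_itv /= ?normr_ge0 //=; last first.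
  by apply: (le_trans ht); lra.
  by apply/andP; split; lra.
by rewrite ltNge ht.
Qed.

Lemma Re_opp (R : realType) (z : R[i]) : complex.Re (- z) = - complex.Re z.
Proof. by case: z. Qed.
Lemma Re_sub (R : realType) (z1 z2 : R[i]) : complex.Re (z1 - z2) = complex.Re z1 - complex.Re z2.
Proof. by case: z1; case: z2. Qed.
Lemma Re_mulr (R : realType) (z : R[i]) (r : R) : complex.Re (z * (r%:C)%C) = complex.Re z * r.
Proof. by case: z => a b /=; rewrite mulr0 subr0. Qed.
Lemma Re_le_nc (R : realType) (z : R[i]) : complex.Re z <= nc z.
Proof.
have := normc_ge_Re z; rewrite ncE rC_le => h.
exact: le_trans (ler_norm _) h.
Qed.

Lemma helper6 (R : realType) (nm c nw nx : R) : 0 < nm -> 0 < c -> 0 <= nw -> 0 <= nx ->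
  nm * c * nw ^+ 2 <= nx * nw -> nm * c * nw <= nx.
Proof.
move=> h1 h2 h3 h4 h.
have [->|nw0] := eqVneq nw 0; first by rewrite mulr0.
have nwp : 0 < nw by rewrite lt0r nw0.
rewrite expr2 mulrA in h.
by rewrite -(ler_pM2r nwp).
Qed.

Theorem lemma2p3 (R : realType)
  (Hp Hm : completeNormedModType R[i])
  (Ip : inner_product Hp) (Iminus : inner_product Hm)
  (sepp : separable Hp) (sepm : separable Hm)
  (Dm : set Hm) (A22 : Hm -> Hm) (A12 : Hm -> Hp)
  (hDm : lin_subspace Dm) (hA22 : linear_on Dm A22) (hA12 : linear_on Dm A12)
  (hdiss : m_dissipative Iminus Dm (fun x => - A22 x))
  (hcpt : exists mu0 : R[i], 'Re mu0 < 0 /\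
     exists RR, bounded_inverse_of Dm A22 mu0 RR /\ compact_operator (A12 \o RR)) :
  forall gamma : R, 0 <= gamma < pi / 2 ->
  forall eps : R, 0 < eps ->
  exists r : R, 0 < r /\
  forall mu : R[i], sector gamma mu -> (r%:C)%C < `|mu| ->
  forall RR, bounded_inverse_of Dm A22 mu RR ->
  forall x : Hm, `|A12 (RR x)| <= (eps%:C)%C * `|x|.
Proof.
move=> gamma hg eps eps0.
have pi0 : 0 < pi :> R := pi_gt0 R.
case: hcpt => mu0 [hmu0 [RR0 [[hR0b [hR0a hR0c]] [hKb hC]]]].
have D0 := hDm.1.
have A220 : A22 0 = 0.
  have := hA22 1 0 0 D0 D0; rewrite scale1r addr0 scale1r.
  by move/(congr1 (fun z => z - A22 0)); rewrite subrr addrK => <-.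
have inj : forall y, RR0 y = 0 -> y = 0.
  by move=> y h; have [_ e] := hR0a y; rewrite h A220 scaler0 subr0 in e.
set c := cos gamma.
have c0 : 0 < c.
  apply: cos_gt0_pihalf; case/andP: hg => g0 g1; apply/andP; split => //; lra.
set B := 1 + 2 / c.
have B0 : 0 < B by rewrite /B; have := divr_gt0 (ltr0Sn R 1) c0; lra.
have [delta [d0 hd]] := lemK Iminus Ip hR0b hKb inj hC (divr_gt0 eps0 B0).
have Bcd : 0 < B * c * delta by rewrite !mulr_gt0.
exists (nc mu0 + (B * c * delta)^-1 + 1); split.
  by have := nc_ge0 mu0; have := invr_gt0 (B * c * delta); rewrite Bcd; lra.
move=> mu [mu_ne0 [theta [htheta hmu]]] hr RR [hRRb [hRRa hRRc]] x.
rewrite ncE rC_lt in hr.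
set nm := nc mu.
have hinv := invr_gt0 (B * c * delta); rewrite Bcd in hinv.
have nm0 : 0 < nm by have := nc_ge0 mu0; rewrite /nm; lra.
have ReMu : complex.Re mu = nm * cos theta.
  by rewrite {1}hmu ncE /= mul0r subr0.
have ct := cos_sector hg htheta.
have ReMu' : nm * c <= - complex.Re mu.
  rewrite ReMu -mulrN; apply: ler_wpM2l; [exact: ltW| rewrite /c; lra].
set w := RR x.
have [Dw Aw] := hRRa x; rewrite -/w in Dw Aw.
have acc : 0 <= complex.Re (ip Iminus (A22 w) w).
  have := hdiss.1 w Dw; rewrite /= ipNl -complexRe -rC0 rC_le Re_opp.
  lra.
have nw : nm * c * nr w <= nr x.
  have E : ip Iminus x w = ip Iminus (A22 w) w - mu * ((nr w ^+ 2)%:C)%C.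
    by rewrite -Aw ipBl ipZl ipnn.
  have := Re_le_nc (ip Iminus x w); rewrite E Re_sub Re_mulr => h1.
  have h2 := CSr Iminus x w.
  apply: helper6 => //; [exact: nr_ge0|exact: nr_ge0|].
  have h3 : nm * c * nr w ^+ 2 <= - complex.Re mu * nr w ^+ 2 := ler_wpM2r (sqr_ge0 _) ReMu'.
  rewrite mulNr in h3.
  rewrite -E in h1; lra.
set y := A22 w - mu0 *: w.
have hy1 : y = x + (mu - mu0) *: w by rewrite -Aw scalerBl addrA subrK.
have R0y : RR0 y = w := hR0c w Dw.
have ny : nr y <= B * nr x.
  rewrite hy1; apply: (le_trans (nrD _ _)); rewrite nrZ.
  have h1 : nc (mu - mu0) <= nm + nc mu0.
    by apply: (le_trans (ncD _ _)); rewrite /nc normrN.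
  have h2 : nm * nr w <= nr x / c by rewrite ler_pdivlMr // mulrAC.
  have h3 : nc mu0 <= nm by lra.
  have := nr_ge0 w; have := nr_ge0 x; have := nc_ge0 (mu - mu0).
  rewrite /B mulrDl mul1r mulrAC -mulrA.
  nra.
rewrite -/w !nrE -rC_mul rC_le.
have [x0|xn0] := eqVneq (nr x) 0.
  have w0 : nr w = 0.
    apply/eqP; rewrite eq_le nr_ge0 andbT.
    have : nm * c * nr w <= 0 by rewrite -x0.
    by rewrite pmulr_rle0 // mulr_gt0.
  move/eqP: w0; rewrite nr_eq0 => /eqP ->.
  have A120 : A12 0 = 0.
    have := hA12 1 0 0 D0 D0; rewrite scale1r addr0 scale1r.
    by move/(congr1 (fun z => z - A12 0)); rewrite subrr addrK => <-.
  by rewrite A120 nr0 x0 mulr0.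
have xp : 0 < nr x by rewrite lt0r xn0 nr_ge0.
set s := (B * nr x)^-1.
have s0 : 0 < s by rewrite invr_gt0 mulr_gt0.
have ncs : nc ((s%:C)%C) = s by rewrite ncC ger0_norm // ltW.
have := hd ((s%:C)%C *: y).
rewrite !nrZ ncs (lin_Z hR0b.1) nrZ ncs R0y.
have Kw : (A12 \o RR0) ((s%:C)%C *: y) = (s%:C)%C *: A12 w.
  by rewrite (lin_Z hKb.1) /= R0y.
rewrite Kw nrZ ncs.
have h1 : s * nr y <= 1.
  by rewrite /s -ler_pdivlMl ?invr_gt0 ?mulr_gt0 // invrK mulr1.
have h2 : s * nr w <= delta.
  have : nr w <= nr x / (nm * c) by rewrite ler_pdivlMr ?mulr_gt0 // mulrC.
  move=> h; apply: (le_trans (ler_wpM2l (ltW s0) h)).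
  have E : s * (nr x / (nm * c)) = (B * nm * c)^-1.
    rewrite /s; field.
    by rewrite !lt0r_neq0 // ?mulr_gt0.
  rewrite E.
  have hnm : (B * c * delta)^-1 <= nm by have := nc_ge0 mu0; lra.
  rewrite -[_^-1]mul1r ler_pdivrMr // in hnm.
  rewrite -[_^-1]mul1r ler_pdivrMr ?mulr_gt0 //.
  by have -> : delta * (B * nm * c) = nm * (B * c * delta) by ring.
move=> /(_ h1 h2) h3.
rewrite -ler_pdivlMl // /s invrK in h3.
have -> : eps * nr x = B * nr x * (eps / B) by field; apply: lt0r_neq0.
exact: h3.
Qed.
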